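(* Let $\mathcal P$ and $\mathcal Q$ be two pairs of lines in the plane. If $\mathcal P$ consists of orthogonal lines, then rotating $\mathcal P$ by any angle about the crossing point of its lines does not change the rectangle locus of $\mathcal P$ and $\mathcal Q$.
   Context: A pair of lines means two distinct lines. The rectangle locus of two pairs $L_1,L_3$ and $L_2,L_4$ is the set of points $p$ in the plane that are the midpoint both of a segment joining $L_1$ and $L_3$ and of a segment joining $L_2$ and $L_4$, these two segments having equal length (equivalently, centers of possibly degenerate rectangles whose diagonals join the lines of the respective pairs). *)

(* Defs.v *)
From Stdlib Require Import Reals.
Open Scope R_scope.

Definition point := (R * R)%type.

Definition is_line (L : point -> Prop) : Prop :=
  exists a b c : R, (a <> 0 \/ b <> 0) /\
    forall p : point, L p <-> a * fst p + b * snd p = c.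

Definition same_line (L M : point -> Prop) : Prop := forall p, L p <-> M p.

Definition is_pair (L M : point -> Prop) : Prop :=
  is_line L /\ is_line M /\ ~ same_line L M.

Definition orthogonal (L M : point -> Prop) : Prop :=
  exists a b c a' b' c' : R, (a <> 0 \/ b <> 0) /\ (a' <> 0 \/ b' <> 0) /\
    (forall p : point, L p <-> a * fst p + b * snd p = c) /\
    (forall p : point, M p <-> a' * fst p + b' * snd p = c') /\
    a * a' + b * b' = 0.

Definition midpoint (x y : point) : point :=
  ((fst x + fst y) / 2, (snd x + snd y) / 2).

Definition dist (x y : point) : R :=
  sqrt ((fst x - fst y) ^ 2 + (snd x - snd y) ^ 2).

Definition rectangle_locus (L1 L3 L2 L4 : point -> Prop) (p : point) : Prop :=
  exists x1 x3 x2 x4 : point,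
    L1 x1 /\ L3 x3 /\ L2 x2 /\ L4 x4 /\
    midpoint x1 x3 = p /\ midpoint x2 x4 = p /\
    dist x1 x3 = dist x2 x4.

Definition rotate (c : point) (t : R) (p : point) : point :=
  (fst c + cos t * (fst p - fst c) - sin t * (snd p - snd c),
   snd c + sin t * (fst p - fst c) + cos t * (snd p - snd c)).

Definition rotate_set (c : point) (t : R) (L : point -> Prop) : point -> Prop :=
  fun p => exists q, L q /\ p = rotate c t q.

(* Main.v *)
Require Import Defs.
From Stdlib Require Import Reals Lra Psatz.
Open Scope R_scope.

Lemma sq_pos (a b : R) : (a <> 0 \/ b <> 0) -> 0 < a*a + b*b.
Proof. intros [H|H]; [assert (0 < a*a) by (apply Rsqr_pos_lt; auto) | assert (0 < b*b) by (apply Rsqr_pos_lt; auto)]; nra. Qed.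

Lemma ortho_char (a b k a' b' k' c1 c2 p1 p2 : R) :
  (a <> 0 \/ b <> 0) -> (a' <> 0 \/ b' <> 0) -> a*a' + b*b' = 0 ->
  a*c1 + b*c2 = k -> a'*c1 + b'*c2 = k' ->
  (exists x1 x3 : point, a*fst x1 + b*snd x1 = k /\ a'*fst x3 + b'*snd x3 = k' /\
      midpoint x1 x3 = (p1,p2)) /\
  (forall x1 x3 : point, a*fst x1 + b*snd x1 = k -> a'*fst x3 + b'*snd x3 = k' ->
      midpoint x1 x3 = (p1,p2) -> Defs.dist x1 x3 = sqrt (4*((p1-c1)^2+(p2-c2)^2))).
Proof.
  intros Hab Hab' Ho Hc Hc'.
  pose proof (sq_pos _ _ Hab) as P1. pose proof (sq_pos _ _ Hab') as P2.
  assert (Hd : a*b' - a'*b <> 0).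
  { intro E. assert ((a*b'-a'*b)*(a*b'-a'*b) + (a*a'+b*b')*(a*a'+b*b') = (a*a+b*b)*(a'*a'+b'*b')); [ring|].
    rewrite E, Ho in H. assert (0 < (a*a+b*b)*(a'*a'+b'*b')) by (apply Rmult_lt_0_compat; auto). nra. }
  split.
  - set (s := 2*(a'*(p1-c1)+b'*(p2-c2))/(a*b'-a'*b)).
    exists (c1 - s*b, c2 + s*a), (2*p1 - (c1 - s*b), 2*p2 - (c2 + s*a)).
    simpl. split; [|split].
    + rewrite <- Hc. ring.
    + unfold s. rewrite <- Hc'. field. auto.
    + unfold midpoint. simpl. f_equal; field.
  - intros [x y] [z w] H1 H3 Hm. unfold midpoint in Hm. simpl in *.
    injection Hm as E1 E2. unfold Defs.dist; simpl. f_equal.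
    set (u1 := x - c1). set (u2 := y - c2). set (w1 := z - c1). set (w2 := w - c2).
    assert (A1 : a*u1 + b*u2 = 0) by (unfold u1,u2; lra).
    assert (A3 : a'*w1 + b'*w2 = 0) by (unfold w1,w2; lra).
    assert (Hu1 : (a*a+b*b)*u1 = -b*(a*u2-b*u1)). { apply Rminus_diag_uniq. transitivity (a*(a*u1+b*u2)); [ring|rewrite A1; ring]. }
    assert (Hu2 : (a*a+b*b)*u2 = a*(a*u2-b*u1)). { apply Rminus_diag_uniq. transitivity (b*(a*u1+b*u2)); [ring|rewrite A1; ring]. }
    assert (Hw1 : (a'*a'+b'*b')*w1 = -b'*(a'*w2-b'*w1)). { apply Rminus_diag_uniq. transitivity (a'*(a'*w1+b'*w2)); [ring|rewrite A3; ring]. }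
    assert (Hw2 : (a'*a'+b'*b')*w2 = a'*(a'*w2-b'*w1)). { apply Rminus_diag_uniq. transitivity (b'*(a'*w1+b'*w2)); [ring|rewrite A3; ring]. }
    assert (K : (a*a+b*b)*(a'*a'+b'*b')*(u1*w1+u2*w2) = 0).
    { transitivity (((a*a+b*b)*u1)*((a'*a'+b'*b')*w1) + ((a*a+b*b)*u2)*((a'*a'+b'*b')*w2)); [ring|].
      rewrite Hu1, Hu2, Hw1, Hw2.
      transitivity ((a*u2-b*u1)*(a'*w2-b'*w1)*(a*a'+b*b')); [ring|]. rewrite Ho; ring. }
    assert (K2 : u1*w1+u2*w2 = 0).
    { apply Rmult_integral in K. destruct K as [K|K]; auto.
      apply Rmult_integral in K; destruct K; lra. }
    assert (x - z = u1 - w1) by (unfold u1,w1; ring).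
    assert (y - w = u2 - w2) by (unfold u2,w2; ring).
    assert (p1 - c1 = (u1+w1)/2) by (unfold u1,w1; lra).
    assert (p2 - c2 = (u2+w2)/2) by (unfold u2,w2; lra).
    rewrite H, H0, H2, H4. nra.
Qed.

Lemma cs1 (t : R) : cos t * cos t + sin t * sin t = 1.
Proof. pose proof (sin2_cos2 t). unfold Rsqr in H. lra. Qed.

Lemma locus_char (M1 M3 L2 L4 : point -> Prop) (a b k a' b' k' c1 c2 : R) :
  (a <> 0 \/ b <> 0) -> (a' <> 0 \/ b' <> 0) -> a*a' + b*b' = 0 ->
  a*c1 + b*c2 = k -> a'*c1 + b'*c2 = k' ->
  (forall p : point, M1 p <-> a*fst p + b*snd p = k) ->
  (forall p : point, M3 p <-> a'*fst p + b'*snd p = k') ->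
  forall p, rectangle_locus M1 M3 L2 L4 p <->
    exists x2 x4, L2 x2 /\ L4 x4 /\ midpoint x2 x4 = p /\
      Defs.dist x2 x4 = sqrt (4*((fst p-c1)^2+(snd p-c2)^2)).
Proof.
  intros Hab Hab' Ho Hc Hc' E1 E3 [p1 p2].
  destruct (ortho_char a b k a' b' k' c1 c2 p1 p2 Hab Hab' Ho Hc Hc') as [[x1 [x3 [H1 [H3 Hm]]]] D].
  split.
  - intros [y1 [y3 [x2 [x4 [G1 [G3 [G2 [G4 [M13 [M24 Dd]]]]]]]]]].
    exists x2, x4. repeat split; auto. rewrite <- Dd. simpl. apply D; auto.
    apply E1; auto. apply E3; auto.
  - intros [x2 [x4 [G2 [G4 [M24 Dd]]]]].
    exists x1, x3, x2, x4. repeat split; auto. apply E1; auto. apply E3; auto.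
    rewrite Dd. simpl. apply D; auto.
Qed.

Lemma rot_line (M : point -> Prop) (a b k c1 c2 t : R) :
  (forall p : point, M p <-> a*fst p + b*snd p = k) -> a*c1 + b*c2 = k ->
  forall p : point, rotate_set (c1,c2) t M p <->
    (a*cos t - b*sin t)*fst p + (a*sin t + b*cos t)*snd p =
    (a*cos t - b*sin t)*c1 + (a*sin t + b*cos t)*c2.
Proof.
  intros E Hc [p1 p2]. pose proof (cs1 t) as CS. unfold rotate_set, rotate; simpl. split.
  - intros [[q1 q2] [Hq Ep]]. apply E in Hq. simpl in Hq. injection Ep as -> ->.
    apply Rminus_diag_uniq.
    transitivity ((a*(q1-c1)+b*(q2-c2))*(cos t * cos t + sin t * sin t)); [ring|].
    replace (a*(q1-c1)+b*(q2-c2)) with 0 by lra. ring.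
  - intros H.
    exists (c1 + cos t*(p1-c1) + sin t*(p2-c2), c2 - sin t*(p1-c1) + cos t*(p2-c2)).
    split.
    + apply E. simpl. rewrite <- Hc. apply Rminus_diag_uniq.
      transitivity ((a*cos t - b*sin t)*(p1-c1) + (a*sin t + b*cos t)*(p2-c2)); [ring|]. lra.
    + simpl. f_equal.
      * transitivity (c1 + (cos t * cos t + sin t * sin t)*(p1-c1)); [rewrite CS; ring|ring].
      * transitivity (c2 + (cos t * cos t + sin t * sin t)*(p2-c2)); [rewrite CS; ring|ring].
Qed.

Theorem proposition5p1 (L1 L3 L2 L4 : point -> Prop) (c : point) (t : R) :
  is_pair L1 L3 -> is_pair L2 L4 ->
  orthogonal L1 L3 ->
  L1 c -> L3 c ->
  forall p : point,
    rectangle_locus L1 L3 L2 L4 p <->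
    rectangle_locus (rotate_set c t L1) (rotate_set c t L3) L2 L4 p.
Proof.
  intros _ _ [a [b [k [a' [b' [k' [Hab [Hab' [E1 [E3 Ho]]]]]]]]]] Hc1 Hc3 p.
  destruct c as [c1 c2].
  apply E1 in Hc1. apply E3 in Hc3. simpl in Hc1, Hc3.
  pose proof (cs1 t) as CS.
  rewrite (locus_char L1 L3 L2 L4 a b k a' b' k' c1 c2 Hab Hab' Ho Hc1 Hc3 E1 E3 p).
  symmetry.
  apply (locus_char _ _ L2 L4 (a*cos t - b*sin t) (a*sin t + b*cos t) ((a*cos t - b*sin t)*c1 + (a*sin t + b*cos t)*c2)
           (a'*cos t - b'*sin t) (a'*sin t + b'*cos t) ((a'*cos t - b'*sin t)*c1 + (a'*sin t + b'*cos t)*c2) c1 c2); try reflexivity.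
  - destruct (Req_dec (a*cos t - b*sin t) 0); [right|left; auto]. intro H0.
    pose proof (sq_pos _ _ Hab).
    assert ((a*cos t - b*sin t)*(a*cos t - b*sin t) + (a*sin t + b*cos t)*(a*sin t + b*cos t) = (a*a+b*b)*(cos t * cos t + sin t * sin t)) by ring.
    rewrite H, H0, CS in H2. lra.
  - destruct (Req_dec (a'*cos t - b'*sin t) 0); [right|left; auto]. intro H0.
    pose proof (sq_pos _ _ Hab').
    assert ((a'*cos t - b'*sin t)*(a'*cos t - b'*sin t) + (a'*sin t + b'*cos t)*(a'*sin t + b'*cos t) = (a'*a'+b'*b')*(cos t * cos t + sin t * sin t)) by ring.
    rewrite H, H0, CS in H2. lra.
  - transitivity ((a*a'+b*b')*(cos t * cos t + sin t * sin t)); [ring|]. rewrite Ho; ring.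
  - apply (rot_line L1 a b k); auto.
  - apply (rot_line L3 a' b' k'); auto.
Qed.
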